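(* Let $G$ be a connected graph with a system of $h$ pairwise non-overlapping paths between two vertices $v_i$ and $v_j$. Then $\{v_i,v_j\}$ is a pair of order $h$ in $G$.
   Context: Graphs are finite, may have multiple edges, no loops. A path is a sequence $u_0,e_1,u_1,\dots,e_\ell,u_\ell$ of vertices and edges with $e_k$ joining $u_{k-1}$ and $u_k$ and the edges pairwise distinct; its length is $\ell$. Two paths do not overlap if they have no common edge. A system of $h$ paths between $v_i$ and $v_j$ is a set of $h$ distinct paths $\mathcal{P}_1,\dots,\mathcal{P}_h$ from $v_i$ to $v_j$, all of the same length $\ell$, such that, numbering the edges of each path $1,\dots,\ell$ consecutively starting at $v_i$, for each $k=1,\dots,\ell$ the graph obtained from $G$ by removing all edges numbered $k$ (in any of the paths) is disconnected. With $c_{ij}$ ($i\neq j$) the number of edges joining $v_i,v_j$, $c_{ii}=-\sum_{j\ne i}c_{ij}$, $M(G)=(c_{ij})$: a pair $\{v_i,v_j\}$ has order $h>0$ if there is $S\in\mathbb{Z}^n$ with $M(G)S=h(e_i-e_j)$ and $\gcd(s_1-s_n,\dots,s_{n-1}-s_n)=1$; equivalently, the class of $e_i-e_j$ in $\mathbb{Z}^n/\mathrm{Im}(M(G))$ has order exactly $h$. *)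

(* Defs.v *)
From HB Require Import structures.
From mathcomp Require Import all_boot all_order all_algebra.
Set Implicit Arguments. Unset Strict Implicit. Unset Printing Implicit Defensive.
Import Order.TTheory GRing.Theory Num.Theory.
Local Open Scope ring_scope.

(* A finite multigraph with vertex set 'I_N (vertices v_0..v_{N-1}) and edge
   set 'I_m; edge e has endpoints (ends e).1 and (ends e).2.  Loopless is a
   separate hypothesis. *)
Section Graph.
Variables (N m : nat) (ends : 'I_m -> 'I_N * 'I_N).

Definition loopless : Prop := forall e, (ends e).1 != (ends e).2.

Definition joins (e : 'I_m) (u v : 'I_N) : bool :=
  (ends e == (u, v)) || (ends e == (v, u)).

Definition adj_without (F : {set 'I_m}) : rel 'I_N :=
  fun u v => [exists e : 'I_m, (e \notin F) && joins e u v].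

Definition connected_without (F : {set 'I_m}) : bool :=
  [forall u, [forall v, connect (adj_without F) u v]].

Definition connected_graph : Prop := connected_without set0.

(* A path u_0, e_1, u_1, ..., e_l, u_l starting at u_0 = a is encoded by the
   pair (vs, es) with vs = [:: u_1; ...; u_l], es = [:: e_1; ...; e_l]. *)
Fixpoint walk_ok (u : 'I_N) (vs : seq 'I_N) (es : seq 'I_m) : bool :=
  match vs, es with
  | [::], [::] => true
  | v :: vs', e :: es' => joins e u v && walk_ok v vs' es'
  | _, _ => false
  end.

Definition is_path (a b : 'I_N) (p : seq 'I_N * seq 'I_m) : bool :=
  [&& walk_ok a p.1 p.2, uniq p.2 & last a p.1 == b].

(* edges numbered k+1 (0-based position k) in the family P *)
Definition edges_at (h : nat) (P : 'I_h -> seq 'I_N * seq 'I_m) (k : nat)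
  : {set 'I_m} := [set e | [exists t : 'I_h, onth (P t).2 k == Some e]].

Definition path_system (a b : 'I_N) (h l : nat)
    (P : 'I_h -> seq 'I_N * seq 'I_m) : Prop :=
  [/\ injective P,
      (forall t, is_path a b (P t)),
      (forall t, size (P t).2 = l) &
      (forall k, (k < l)%N -> ~~ connected_without (edges_at P k))].

Definition non_overlapping (h : nat) (P : 'I_h -> seq 'I_N * seq 'I_m) : Prop :=
  forall t t', t != t' -> forall e, e \in (P t).2 -> e \notin (P t').2.

Definition mult (u v : 'I_N) : nat := #|[set e | joins e u v]|.

Definition lapM : 'M[int]_N :=
  \matrix_(u, v) (if u == v then (- (\sum_(w | w != u) (mult u w)%:Z))%R
                  else (mult u v)%:Z).
End Graph.

(* {v_i, v_j} has order h, for a graph on vertices 'I_n.+1 (v_n = ord_max) *)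
Definition pair_order (n m : nat) (ends : 'I_m -> 'I_n.+1 * 'I_n.+1)
    (i j : 'I_n.+1) (h : nat) : Prop :=
  (0 < h)%N /\
  exists S : 'cV[int]_n.+1,
    (lapM ends *m S = (h%:Z) *: (delta_mx i 0 - delta_mx j 0))%R /\
    \big[gcdn/0%N]_(k < n) `|(S (widen_ord (leqnSn n) k) 0 - S ord_max 0)%R|%N = 1%N.

(* Main.v *)
Require Import Defs.
From HB Require Import structures.
From mathcomp Require Import all_boot all_order all_algebra.
From mathcomp Require Import zify.
Set Implicit Arguments. Unset Strict Implicit. Unset Printing Implicit Defensive.
Import Order.TTheory GRing.Theory Num.Theory.

Section Walk.
Variables (N m : nat) (ends : 'I_m -> 'I_N * 'I_N).

Lemma walk_size a vs es : walk_ok ends a vs es -> size vs = size es.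
Proof.
elim: vs a es => [|v vs IH] a [|e es] //= /andP[_ w]. by rewrite (IH _ _ w).
Qed.

Lemma walk_joins a vs es e0 d p : walk_ok ends a vs es -> p < size es ->
  joins ends (nth e0 es p) (nth d (a :: vs) p) (nth d (a :: vs) p.+1).
Proof.
elim: vs a es p => [|v vs IH] a [|e es] p //= /andP[je w].
case: p => [|p] //= lp. exact: IH.
Qed.

Lemma joins_sym e u v : joins ends e u v = joins ends e v u.
Proof. by rewrite /joins orbC. Qed.

Lemma adj_sym (F : {set 'I_m}) : symmetric (adj_without ends F).
Proof.
move=> u v; rewrite /adj_without; apply/existsP/existsP => -[e He]; exists e;
by rewrite joins_sym.
Qed.

Lemma walk_connect (F : {set 'I_m}) a vs es e0 (d : 'I_N) p1 k : walk_ok ends a vs es ->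
  p1 + k <= size es ->
  (forall q, p1 <= q < p1 + k -> nth e0 es q \notin F) ->
  connect (adj_without ends F) (nth d (a :: vs) p1) (nth d (a :: vs) (p1 + k)).
Proof.
move=> w; elim: k => [|k IH] hk hq; first by rewrite addn0 connect0.
rewrite addnS; apply: connect_trans (IH _ _) _.
- by apply: leq_trans hk; rewrite addnS.
- by move=> q /andP[q1 q2]; apply: hq; rewrite q1 /= addnS ltnS ltnW.
apply: connect1; apply/existsP; exists (nth e0 es (p1 + k)).
rewrite hq ?leq_addr ?addnS ?ltnSn //=.
by apply: walk_joins => //; rewrite -addnS.
Qed.

Lemma connect_closedP (T : finType) (e : rel T) (C : pred T) a :
  C a -> (forall u v, C u -> e u v -> C v) -> forall v, connect e a v -> C v.
Proof.
move=> Ca cl v /connectP [p pth ->]; elim: p a Ca pth => //= b p IH a Ca /andP[eab pth].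
apply: IH pth; exact: cl eab.
Qed.

End Walk.

Section Main.
Variables (N m : nat) (ends : 'I_m -> 'I_N * 'I_N).
Hypothesis Hloop : loopless ends.
Hypothesis Hconn : connected_graph ends.
Variables (i j : 'I_N) (h l : nat) (P : 'I_h -> seq 'I_N * seq 'I_m).
Hypothesis Hsys : path_system ends i j l P.
Hypothesis Hno : non_overlapping P.
Variable e0 : 'I_m.

Definition x t p := nth i (i :: (P t).1) p.
Definition ed t k := nth e0 (P t).2 k.
Definition E k := edges_at P k.
Definition D k v : bool := ~~ connect (adj_without ends (E k)) i v.

Lemma size_es t : size (P t).2 = l.
Proof. by case: Hsys. Qed.

Lemma walk_t t : walk_ok ends i (P t).1 (P t).2.
Proof. by case: Hsys => _ H _ _; case/and3P: (H t). Qed.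

Lemma uniq_t t : uniq (P t).2.
Proof. by case: Hsys => _ H _ _; case/and3P: (H t). Qed.

Lemma x0 t : x t 0 = i.
Proof. by []. Qed.

Lemma xl t : x t l = j.
Proof.
case: Hsys => _ H _ _; case/and3P: (H t) => w _ /eqP <-.
rewrite /x -(size_es t) -(walk_size w).
by case: (P t).1 => //= v vs; rewrite (last_nth i).
Qed.

Lemma joins_t t k : k < l -> joins ends (ed t k) (x t k) (x t k.+1).
Proof. by move=> kl; apply: walk_joins (walk_t t) _; rewrite size_es. Qed.

Lemma inE_k k e : k < l -> (e \in E k) = [exists t, ed t k == e].
Proof.
move=> kl; rewrite /E /edges_at inE; apply: eq_existsb => t.
have : k < size (P t).2 by rewrite size_es.
rewrite /ed; clear kl; elim: (P t).2 k => [|a s IH] [|k] //= H.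
all: try exact: IH.
all: by apply/eqP/eqP => [[]|->].
Qed.

Lemma ed_in t k : k < l -> ed t k \in (P t).2.
Proof. by move=> kl; apply: mem_nth; rewrite size_es. Qed.

Lemma notin_E t k p : k < l -> p < l -> p != k -> ed t p \notin E k.
Proof.
move=> kl pl pk; rewrite inE_k //; apply/existsP => -[t' /eqP e].
case: (eqVneq t' t) => [ett|ntt].
- subst t'; move: e; rewrite /ed => /eqP; rewrite nth_uniq ?size_es ?uniq_t //.
  by rewrite eq_sym (negbTE pk).
- by move: (Hno ntt (ed_in t' kl)); rewrite e ed_in.
Qed.

Lemma ed_inj k : k < l -> injective (fun t => ed t k).
Proof.
move=> kl t t' e; apply/eqP; apply/negP => /negP ntt.
by move: (Hno ntt (ed_in t kl)); rewrite /= e ed_in.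
Qed.

Lemma C_prefix t k p : k < l -> p <= k -> ~~ D k (x t p).
Proof.
move=> kl pk; rewrite /D negbK /x.
have := @walk_connect N m ends (E k) i _ _ e0 i 0 p (walk_t t).
rewrite add0n /=; apply.
- by rewrite size_es (leq_trans pk) // ltnW.
- move=> q; rewrite ?add0n ?leq0n /= => qp; apply: notin_E => //.
  + lia.
  + rewrite neq_ltn; apply/orP; left; lia.
Qed.

Lemma connect_sym' F : connect_sym (adj_without ends F).
Proof. exact/sym_connect_sym/adj_sym. Qed.

Lemma x_to_j t k p : k < p <= l -> connect (adj_without ends (E k)) (x t p) j.
Proof.
case/andP=> kp pl; rewrite -(xl t) /x -(subnKC pl).
apply: (@walk_connect N m ends (E k) i _ _ e0 i p (l - p) (walk_t t)).
- by rewrite subnKC // size_es.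
- move=> q /andP[pq ql]; rewrite subnKC // in ql; apply: notin_E => //.
  + lia.
  + rewrite neq_ltn; apply/orP; right; lia.
Qed.

Lemma j_notC k : k < l -> D k j.
Proof.
move=> kl; apply/negP => Cj.
case: Hsys => _ _ _ /(_ k kl); apply/negP; rewrite negbK.
have allC : forall v, connect (adj_without ends (E k)) i v.
  move=> v0; apply: (@connect_closedP _ (adj_without ends set0) (connect (adj_without ends (E k)) i) i); last first.
    by move/forallP: Hconn => /(_ i) /forallP.
    all: try exact: connect0.
  move=> u v Cu /existsP [e /andP[_ je]].
  case: (boolP (e \in E k)) => eE; last first.
    apply: connect_trans Cu (connect1 _); apply/existsP; exists e; by rewrite eE.
  move: eE; rewrite inE_k // => /existsP [t /eqP et].
  have jt := joins_t t kl; rewrite et in jt.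
  have Ca : connect (adj_without ends (E k)) i (x t k) by move: (C_prefix t kl (leqnn k)); rewrite /D negbK.
  have Cb : connect (adj_without ends (E k)) i (x t k.+1).
    apply: connect_trans Cj _; rewrite connect_sym'; apply: x_to_j; by rewrite ltnSn.
  have hv : (v == (ends e).1) || (v == (ends e).2).
    by move: je; rewrite /joins => /orP[]/eqP->; rewrite eqxx ?orbT.
  move: jt; rewrite /joins => /orP[]/eqP E1; rewrite E1 /= in hv; by case/orP: hv => /eqP->.
apply/forallP => u; apply/forallP => v.
by apply: connect_trans (allC v); rewrite connect_sym'.
Qed.

Lemma D_suffix t k p : k < p <= l -> D k (x t p).
Proof.
move=> kpl; have kl : k < l by case/andP: kpl => a b; exact: leq_trans a b.
apply/negP => C.
by move: (j_notC kl); rewrite /D (connect_trans C (x_to_j t kpl)).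
Qed.

Lemma D_same k e : e \notin E k -> D k (ends e).1 = D k (ends e).2.
Proof.
move=> eE; rewrite /D; congr negb.
have a : adj_without ends (E k) (ends e).1 (ends e).2.
  by apply/existsP; exists e; rewrite eE /joins -surjective_pairing eqxx.
apply/idP/idP => H.
- exact: connect_trans H (connect1 a).
- by apply: connect_trans H _; rewrite connect_sym' connect1.
Qed.


Local Open Scope ring_scope.

Definition Sv v : int := \sum_(k < l) (D k v)%:R.
Definition S : 'cV[int]_N := \col_(v < N) Sv v.

Lemma MS1 u : (lapM ends *m S) u 0 = \sum_w (mult ends u w)%:Z * (Sv w - Sv u).
Proof.
rewrite mxE (bigD1 u) //= /lapM !mxE eqxx.
rewrite [in RHS](bigD1 u) //= subrr mulr0 add0r.
rewrite mulNr mulr_suml -sumrN -big_split /=.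
apply: eq_bigr => w wu; rewrite !mxE eq_sym (negbTE wu) mulrBr addrC.
by [].
Qed.

Lemma joins_split e u w : ((joins ends e u w)%:R : int) =
  (((ends e).1 == u) && ((ends e).2 == w))%:R + (((ends e).2 == u) && ((ends e).1 == w))%:R.
Proof.
have := Hloop e; rewrite /joins; case: (ends e) => a b /= ab.
rewrite !xpair_eqE.
case au: (a == u); case bu: (b == u) => //=.
- by move/eqP: au => au; move/eqP: bu => bu; subst; rewrite eqxx in ab.
all: by case: (a == w); case: (b == w).
Qed.

Lemma sum_pick (b : 'I_N) (c : bool) (g : 'I_N -> int) :
  \sum_w (c && (b == w))%:R * g w = c%:R * g b.
Proof.
case: c => /=; last by rewrite mul0r big1 // => w _; rewrite mul0r.
rewrite (bigD1 b) //= eqxx big1 ?addr0 // => w /negbTE; rewrite eq_sym => ->.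
by rewrite mul0r.
Qed.

Lemma edge_sum e u (g : 'I_N -> int) : \sum_w ((joins ends e u w)%:R : int) * g w =
  ((ends e).1 == u)%:R * g (ends e).2 + ((ends e).2 == u)%:R * g (ends e).1.
Proof.
under eq_bigr => w _ do rewrite joins_split mulrDl.
by rewrite big_split /= !sum_pick.
Qed.

Lemma MS2 u : (lapM ends *m S) u 0 = \sum_e
  (((ends e).1 == u)%:R * (Sv (ends e).2 - Sv u) + ((ends e).2 == u)%:R * (Sv (ends e).1 - Sv u)).
Proof.
rewrite MS1.
under eq_bigr => w _ do rewrite -natz /mult -sum1_card natr_sum big_mkcond mulr_suml.
rewrite exchange_big /=; apply: eq_bigr => e _.
rewrite -(edge_sum e u (fun w => Sv w - Sv u)); apply: eq_bigr => w _.
by rewrite inE; case: joins.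
Qed.


Definition phi k u e : int :=
  ((ends e).1 == u)%:R * ((D k (ends e).2)%:R - (D k u)%:R) +
  ((ends e).2 == u)%:R * ((D k (ends e).1)%:R - (D k u)%:R).

Lemma MS3 u : (lapM ends *m S) u 0 = \sum_(k < l) \sum_e phi k u e.
Proof.
rewrite MS2 exchange_big; apply: eq_bigr => e _.
by rewrite /Sv -!sumrB !mulr_sumr -big_split.
Qed.

Lemma Ek_imset k : (k < l)%N -> E k = [set ed t k | t in setT].
Proof.
move=> kl; apply/setP => e; rewrite inE_k //; apply/existsP/imsetP.
- by case=> t /eqP <-; exists t.
- by case=> t _ ->; exists t.
Qed.

Lemma phi_ed k u t : (k < l)%N -> phi k u (ed t k) = (x t k == u)%:R - (x t k.+1 == u)%:R.
Proof.
move=> kl; have Da := C_prefix t kl (leqnn k).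
have Db : D k (x t k.+1) by apply: D_suffix; rewrite ltnSn.
have ab : x t k != x t k.+1 by apply: contraNneq Da => ->.
have J := joins_t t kl; rewrite /phi.
case: (eqVneq (x t k) u) => [<-|au]; [| case: (eqVneq (x t k.+1) u) => [<-|bu]];
move: J; rewrite /joins => /orP[] /eqP -> /=;
rewrite ?(negbTE Da) ?Db ?eqxx ?(negbTE ab) ?(negbTE au) ?(negbTE bu) ?(eq_sym (x t k.+1)) ?(negbTE ab) //.
all: try by rewrite !mul0r.
all: match goal with |- ?g => idtac g end.
Qed.

Lemma phi_k k u : (k < l)%N -> \sum_e phi k u e = \sum_t ((x t k == u)%:R - (x t k.+1 == u)%:R).
Proof.
move=> kl; rewrite (bigID (fun e => e \in E k)) /= [X in _ + X]big1 ?addr0.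
- rewrite Ek_imset // big_imset /=; last by move=> t t' _ _; apply: ed_inj.
  by apply: eq_big => [t|t _]; [rewrite inE | exact: phi_ed].
- move=> e eE; have := D_same eE; rewrite /phi.
  move=> He.
  case: (eqVneq (ends e).1 u) => [<-|_]; [|case: (eqVneq (ends e).2 u) => [<-|_]];
  by rewrite /= ?He ?subrr ?mulr0 ?mul0r ?addr0.
Qed.

Lemma MS4 u : (lapM ends *m S) u 0 = \sum_(t : 'I_h) ((i == u)%:R - (j == u)%:R).
Proof.
rewrite MS3; under eq_bigr => k _ do rewrite phi_k //.
rewrite exchange_big; apply: eq_bigr => t _.
rewrite -(x0 t) -(xl t).
have := telescope_sumr (fun k => ((x t k == u)%:R : int)) (leq0n l).
rewrite big_mkord => H; rewrite -opprB -H -sumrN.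
by apply: eq_bigr => k _; rewrite opprB.
Qed.

End Main.

Unset Implicit Arguments.

Theorem lemma2p2 (n m : nat) (ends : 'I_m -> 'I_n.+1 * 'I_n.+1)
  (Hloop : loopless ends) (Hconn : connected_graph ends)
  (i j : 'I_n.+1) (Hij : i != j)
  (h l : nat) (Hh : 0 < h) (P : 'I_h -> seq 'I_n.+1 * seq 'I_m)
  (Hsys : path_system ends i j l P) (Hno : non_overlapping P) :
  pair_order ends i j h.
Proof.
pose t0 : 'I_h := Ordinal Hh.
have l0 : (0 < l)%N.
  case: l Hsys => // Hs; have := xl Hs t0; rewrite /x /= => E; by rewrite E eqxx in Hij.
have [e0 _] : exists e0 : 'I_m, true.
  have := size_es Hsys t0; case: (P t0).2 => [|e s] /=; first by move=> E; rewrite -E in l0.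
  by exists e.
have Svi : Sv ends i l P i = 0%R.
  by rewrite /Sv big1 // => k _; rewrite /D connect0.
have Sv1 : Sv ends i l P (x i P t0 1) = 1%R.
{ rewrite /Sv (_ : l = l.-1.+1); last by lia.
  rewrite big_ord_recl /= (D_suffix Hconn Hsys Hno e0) ?big1 ?addr0 //.
  move=> k _; rewrite (negbTE (@C_prefix _ _ _ _ _ _ _ _ Hsys Hno e0 t0 (bump 0 k) 1 _ _)) //.
  all: try by have := ltn_ord k; rewrite /bump /=; lia. }
split=> //; exists (S ends i l P); split.
  apply/matrixP => u c; rewrite (ord1 c) (MS4 Hloop Hconn Hsys Hno e0) !mxE.
  rewrite sumr_const card_ord (eq_sym i u) (eq_sym j u).
  by rewrite !andbT mulrC -[Posz h]natz mulr_natr.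
set g := (\big[gcdn/0%N]_(k < n) _)%N.
have gd : forall v, (g%:Z %| (Sv ends i l P v - Sv ends i l P ord_max)%R)%Z.
  move=> v; case: (eqVneq v ord_max) => [->|vn]; first by rewrite subrr dvdz0.
  have vlt : (v < n)%N by have := ltn_ord v; move: vn; rewrite -val_eqE /=; lia.
  rewrite dvdzE absz_nat.
  have := (@dvdn_biggcdP _ xpredT (fun k : 'I_n => `|(S ends i l P (widen_ord (leqnSn n) k) 0 - S ends i l P ord_max 0)%R|%N) g).
  move=> /(_ (dvdnn _)) /(_ (Ordinal vlt) isT).
  by rewrite !mxE /=; have -> : widen_ord (leqnSn n) (Ordinal vlt) = v by apply: val_inj.
have : (g%:Z %| 1%R)%Z.
  rewrite -Sv1 -[Sv _ _ _ _ (x _ _ _ _)]subr0 -Svi.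
  have -> : (Sv ends i l P (x i P t0 1) - Sv ends i l P i =
    (Sv ends i l P (x i P t0 1) - Sv ends i l P ord_max) - (Sv ends i l P i - Sv ends i l P ord_max))%R.
    by rewrite opprB addrA subrK.
  by rewrite rpredB.
by rewrite dvdzE absz_nat /= dvdn1 => /eqP.
Qed.
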